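(* Let $\mathcal{A}$ be the free associative $\mathbb{C}$-algebra on two noncommuting generators $L$ and $R$, let $S=\{FG-GF : F,G \text{ nonempty balanced words}\}$, and let $\mathcal{J}$ be the two-sided ideal of $\mathcal{A}$ generated by $S$. Let $\Upsilon$ be the set of equivalence classes (under $\sim$) of upper primes and $\Lambda$ the set of equivalence classes of lower primes. For each $\upsilon\in\Upsilon$ choose an arbitrary representative $U_\upsilon\in\upsilon$, and for each $\lambda\in\Lambda$ choose an arbitrary representative $D_\lambda\in\lambda$. Define $$S'''=\{U_\upsilon D_\lambda-D_\lambda U_\upsilon : \upsilon\in\Upsilon,\ \lambda\in\Lambda\}.$$ Then $S'''\subseteq S$, $S'''$ generates $\mathcal{J}$ as a two-sided ideal, and no proper subset of $S'''$ generates $\mathcal{J}$.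
   Context: Words are finite products of the letters $L,R$ (the empty word is allowed and is the identity); the words form a $\mathbb{C}$-basis of $\mathcal{A}$. A word is balanced if it contains equally many $L$'s and $R$'s. For words $X,Y$ write $X\sim Y$ if $X-Y\in\mathcal{J}$; this is an equivalence relation on words. A word is prime if it is nonempty, balanced, and cannot be written as a product of two nonempty balanced words. For a balanced word $W=a_1\cdots a_n$ and $0\le k\le n$, its $k$-th elevation is $e_k(W)=\sum_{i=1}^k \overline{a_i}$, where $\overline{R}=1$, $\overline{L}=-1$. A prime word $P$ is an upper prime if $e_k(P)>0$ for all $1\le k\le l(P)-1$, and a lower prime if $e_k(P)<0$ for all $1\le k\le l(P)-1$ (every prime is exactly one of these), where $l(P)$ is the length of $P$. *)

(* Defs.v *)
From mathcomp Require Import all_boot all_algebra.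
From mathcomp Require Import complex.
From mathcomp Require Import Rstruct.
Set Implicit Arguments.
Unset Strict Implicit.
Unset Printing Implicit Defensive.
Import GRing.Theory Num.Theory.
Local Open Scope ring_scope.

Definition C : fieldType := complex Rdefinitions.R.

Definition word := seq bool.
Definition letR : bool := true.
Definition letL : bool := false.

(* Elements of the free algebra A = C<L,R> are represented by their
   coefficient functions on the word basis (finitely supported). *)
Definition alg := word -> C.

Definition finsupp (f : alg) : Prop :=
  exists s : seq word, forall w, w \notin s -> f w = 0.

Definition wrd (v : word) : alg := fun w => (w == v)%:R.

Definition alg_add (f g : alg) : alg := fun w => f w + g w.
Definition alg_sub (f g : alg) : alg := fun w => f w - g w.
(* product: concatenation of words extended bilinearly *)
Definition alg_mul (f g : alg) : alg :=
  fun w => \sum_(i < (size w).+1) f (take i w) * g (drop i w).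

Definition comm (f g : alg) : alg := alg_sub (alg_mul f g) (alg_mul g f).

Definition ideal_gen (T : alg -> Prop) (f : alg) : Prop :=
  exists (n : nat) (a t b : nat -> alg),
    (forall i, (i < n)%N -> [/\ finsupp (a i), T (t i) & finsupp (b i)]) /\
    f = (fun w => \sum_(i < n) alg_mul (alg_mul (a i) (t i)) (b i) w).

Definition balanced (w : word) : bool := count_mem letR w == count_mem letL w.

Definition S_set (x : alg) : Prop :=
  exists F G : word, [/\ F != [::], G != [::], balanced F, balanced G &
                         x = comm (wrd F) (wrd G)].

Definition J (f : alg) : Prop := ideal_gen S_set f.

Definition wequiv (X Y : word) : Prop := J (alg_sub (wrd X) (wrd Y)).

Definition prime_word (P : word) : Prop :=
  [/\ P != [::], balanced P &
      ~ exists F G : word, [/\ F != [::], G != [::], balanced F, balanced G &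
                              P = F ++ G]].

Definition elev (W : word) (k : nat) : int :=
  (count_mem letR (take k W))%:Z - (count_mem letL (take k W))%:Z.

Definition upper_prime (P : word) : Prop :=
  prime_word P /\ forall k, (1 <= k <= (size P).-1)%N -> 0 < elev P k.

Definition lower_prime (P : word) : Prop :=
  prime_word P /\ forall k, (1 <= k <= (size P).-1)%N -> elev P k < 0.

(* A choice of one representative in each ~-class of upper primes
   (resp. lower primes), given as a function constant on classes. *)
Definition rep_choice (isp : word -> Prop) (U : word -> word) : Prop :=
  (forall P, isp P -> isp (U P) /\ wequiv (U P) P) /\
  (forall P Q, isp P -> isp Q -> wequiv P Q -> U P = U Q).

Definition S3 (U D : word -> word) (x : alg) : Prop :=
  exists P Q, [/\ upper_prime P, lower_prime Q & x = comm (wrd (U P)) (wrd (D Q))].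

(* Main.v *)
Require Import Defs.
From mathcomp Require Import all_boot all_algebra.
From mathcomp Require Import zify ring.
From Stdlib Require Import FunctionalExtensionality ClassicalDescription.
Set Implicit Arguments.
Unset Strict Implicit.
Unset Printing Implicit Defensive.
Import GRing.Theory Num.Theory.
Local Open Scope ring_scope.
Lemma sum_ord_one (N : nat) (F : nat -> C) (k : nat) :
  (forall i, (i < N)%N -> i != k -> F i = 0) ->
  \sum_(i < N) F i = if (k < N)%N then F k else 0.
Proof.
elim: N => [|N IH] H; first by rewrite big_ord0.
rewrite big_ord_recr /= IH; last by move=> i Hi; apply: H; lia.
case: (eqVneq k N) => [->|Hne]; first by rewrite ltnn add0r ltnSn.
rewrite (H N) // ?addr0; last by rewrite eq_sym.
case: (ltngtP k N) => Hk.
- by have -> : (k < N.+1)%N by lia.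
- by have -> : (k < N.+1)%N = false by lia.
- by move: Hne; rewrite Hk eqxx.
Qed.

Lemma wrd_wrd (a b : word) : alg_mul (wrd a) (wrd b) = wrd (a ++ b).
Proof.
apply: functional_extensionality => w; rewrite /alg_mul /wrd.
rewrite (@sum_ord_one _ (fun i => (take i w == a)%:R * (drop i w == b)%:R) (size a)).
  case: ifP => Hs.
    case: (eqVneq w (a ++ b)) => [->|Hne].
      by rewrite take_size_cat // drop_size_cat // !eqxx mulr1.
    case: (eqVneq (take (size a) w) a) => Ht; last by rewrite mul0r.
    case: (eqVneq (drop (size a) w) b) => Hd; last by rewrite mulr0.
    by move: Hne; rewrite -(cat_take_drop (size a) w) Ht Hd eqxx.
  case: (eqVneq w (a ++ b)) => // Hw; subst w.
  by move: Hs; rewrite size_cat; lia.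
move=> i Hi Hne; case: (eqVneq (take i w) a) => Ht; last by rewrite mul0r.
by move: Hne; rewrite -Ht size_take; case: ifP => //; lia.
Qed.

Definition sc (s : seq word) (c : word -> C) (g : word -> alg) : alg :=
  fun w => \sum_(x <- s) c x * g x w.

Lemma mul_sc_l s c g h :
  alg_mul (sc s c g) h = sc s c (fun x => alg_mul (g x) h).
Proof.
apply: functional_extensionality => w; rewrite /alg_mul /sc.
under eq_bigr => i _ do rewrite mulr_suml.
rewrite exchange_big /=; apply: eq_bigr => x _.
by rewrite mulr_sumr; apply: eq_bigr => i _; rewrite mulrA.
Qed.

Lemma mul_sc_r s c g h :
  alg_mul h (sc s c g) = sc s c (fun x => alg_mul h (g x)).
Proof.
apply: functional_extensionality => w; rewrite /alg_mul /sc.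
under eq_bigr => i _ do rewrite mulr_sumr.
rewrite exchange_big /=; apply: eq_bigr => x _.
rewrite mulr_sumr; apply: eq_bigr => i _.
by rewrite mulrA [h _ * c x]mulrC -mulrA.
Qed.

Lemma sum_seq_one (r : seq word) (w : word) (c : C) : uniq r ->
  \sum_(x <- r) (if x == w then c else 0) = if w \in r then c else 0.
Proof.
elim: r => [|y r IH] /=; first by rewrite big_nil.
move=> /andP [Hy Hu]; rewrite big_cons IH // inE.
case: (eqVneq y w) => [<-|Hne] /=; last by rewrite add0r.
by rewrite (negbTE Hy) addr0.
Qed.

Lemma finsupp_dec (a : alg) : finsupp a -> exists s, a = sc s a wrd.
Proof.
case=> s Hs; exists (undup s); apply: functional_extensionality => w.
rewrite /sc /wrd.
rewrite (eq_bigr (fun x => if x == w then a w else 0)); last first.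
  by move=> x _; case: (eqVneq x w) => [->|H]; rewrite /= ?mulr1 ?mulr0.
rewrite sum_seq_one ?undup_uniq // mem_undup.
by case: ifP => // /negbT /Hs.
Qed.

Definition sh (x : word) (t : alg) (y : word) : alg :=
  alg_mul (alg_mul (wrd x) t) (wrd y).

Lemma dec_prod a t b sa sb : a = sc sa a wrd -> b = sc sb b wrd ->
  alg_mul (alg_mul a t) b = fun w => \sum_(x <- sa) \sum_(y <- sb) a x * b y * sh x t y w.
Proof.
move=> Ha Hb; rewrite {1}Ha mul_sc_l mul_sc_l {1}Hb.
apply: functional_extensionality => w; rewrite /sc; apply: eq_bigr => x _.
rewrite mul_sc_r /sc mulr_sumr; apply: eq_bigr => y _.
by rewrite /sh mulrA [a x * b y]mulrC.
Qed.

Lemma mul_sub_l f g h : alg_mul (alg_sub f g) h = alg_sub (alg_mul f h) (alg_mul g h).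
Proof.
apply: functional_extensionality => w; rewrite /alg_mul /alg_sub -sumrB.
by apply: eq_bigr => i _; rewrite mulrBl.
Qed.

Lemma mul_sub_r f g h : alg_mul h (alg_sub f g) = alg_sub (alg_mul h f) (alg_mul h g).
Proof.
apply: functional_extensionality => w; rewrite /alg_mul /alg_sub -sumrB.
by apply: eq_bigr => i _; rewrite mulrBr.
Qed.

Lemma comm_wrd F G : comm (wrd F) (wrd G) = alg_sub (wrd (F ++ G)) (wrd (G ++ F)).
Proof. by rewrite /comm !wrd_wrd. Qed.

Lemma sh_bin x p q y :
  sh x (alg_sub (wrd p) (wrd q)) y = alg_sub (wrd (x ++ p ++ y)) (wrd (x ++ q ++ y)).
Proof. by rewrite /sh mul_sub_r mul_sub_l !wrd_wrd !catA. Qed.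

Lemma finsupp_wrd u : finsupp (wrd u).
Proof. by exists [:: u] => w; rewrite inE /wrd => /negbTE ->. Qed.
Lemma ig_ext T f g : (forall w, f w = g w) -> ideal_gen T f -> ideal_gen T g.
Proof. by move=> H; rewrite (functional_extensionality _ _ H). Qed.

Lemma ig_mono (T T' : alg -> Prop) f : (forall x, T x -> T' x) ->
  ideal_gen T f -> ideal_gen T' f.
Proof.
move=> H [n [a [t [b [Hi ->]]]]]; exists n, a, t, b; split => // i Hn.
by case: (Hi i Hn) => ? ? ?; split => //; apply: H.
Qed.

Lemma ig_zero T : ideal_gen T (fun _ => 0).
Proof.
exists 0%N, (fun _ => wrd [::]), (fun _ => wrd [::]), (fun _ => wrd [::]).
split => //; apply: functional_extensionality => w; by rewrite big_ord0.
Qed.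

Lemma ig_add T f g : ideal_gen T f -> ideal_gen T g -> ideal_gen T (fun w => f w + g w).
Proof.
move=> [n1 [a1 [t1 [b1 [H1 ->]]]]] [n2 [a2 [t2 [b2 [H2 ->]]]]].
pose sel (X : nat -> alg) (Y : nat -> alg) := fun i => if (i < n1)%N then X i else Y (i - n1)%N.
exists (n1 + n2)%N, (sel a1 a2), (sel t1 t2), (sel b1 b2); split.
  move=> i Hi; rewrite /sel; case: ifP => Hl; first exact: H1.
  by apply: H2; lia.
apply: functional_extensionality => w; cbv beta; rewrite big_split_ord; congr (_ + _).
  by apply: eq_bigr => i _; rewrite /sel /= ltn_ord.
apply: eq_bigr => i _; rewrite /sel /=.
have -> : (n1 + i < n1)%N = false by lia.
by have -> : (n1 + i - n1)%N = i by lia.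
Qed.

Lemma mul_scale_l (c : C) f g : alg_mul (fun w => c * f w) g = fun w => c * alg_mul f g w.
Proof.
apply: functional_extensionality => w; rewrite /alg_mul mulr_sumr.
by apply: eq_bigr => i _; rewrite mulrA.
Qed.

Lemma ig_scale T (c : C) f : ideal_gen T f -> ideal_gen T (fun w => c * f w).
Proof.
move=> [n [a [t [b [H ->]]]]].
exists n, (fun i w => c * a i w), t, b; split.
  move=> i Hi; case: (H i Hi) => [[s Hs] ? ?]; split => //.
  by exists s => w /Hs ->; rewrite mulr0.
apply: functional_extensionality => w; rewrite mulr_sumr; apply: eq_bigr => i _.
by rewrite mul_scale_l mul_scale_l.
Qed.

Lemma ig_gen (T : alg -> Prop) u t v : T t -> ideal_gen T (sh u t v).
Proof.
move=> Ht; exists 1%N, (fun _ => wrd u), (fun _ => t), (fun _ => wrd v); split.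
  by move=> i _; split => //; apply: finsupp_wrd.
by apply: functional_extensionality => w; rewrite big_ord1.
Qed.

Lemma ig_sum_seq (X : Type) T (r : seq X) (F : X -> alg) :
  (forall x, ideal_gen T (F x)) -> ideal_gen T (fun w => \sum_(x <- r) F x w).
Proof.
move=> H; elim: r => [|x r IH].
  by apply: ig_ext (ig_zero T) => w; rewrite big_nil.
by apply: ig_ext (ig_add (H x) IH) => w; rewrite big_cons.
Qed.

Lemma ig_sum_ord T n (F : nat -> alg) :
  (forall i, (i < n)%N -> ideal_gen T (F i)) -> ideal_gen T (fun w => \sum_(i < n) F i w).
Proof.
elim: n => [|n IH] H.
  by apply: ig_ext (ig_zero T) => w; rewrite big_ord0.
have H1 : ideal_gen T (fun w => \sum_(i < n) F i w).
  by apply: IH => i Hi; apply: H; lia.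
by apply: ig_ext (ig_add H1 (H n (ltnSn n))) => w; rewrite big_ord_recr.
Qed.

Lemma ig_sub T f g : ideal_gen T f -> ideal_gen T g -> ideal_gen T (alg_sub f g).
Proof.
move=> Hf Hg; apply: ig_ext (ig_add Hf (ig_scale (-1) Hg)) => w.
by rewrite /alg_sub mulN1r.
Qed.

Lemma ig_decomp (T T' : alg -> Prop) f :
  (forall t x y, T t -> ideal_gen T' (sh x t y)) -> ideal_gen T f -> ideal_gen T' f.
Proof.
move=> H [n [a [t [b [Hi ->]]]]].
apply: (ig_sum_ord (F := fun i => alg_mul (alg_mul (a i) (t i)) (b i))) => i Hn.
case: (Hi i Hn) => Ha Ht Hb.
case: (finsupp_dec Ha) => sa Hsa; case: (finsupp_dec Hb) => sb Hsb.
rewrite (dec_prod (t i) Hsa Hsb).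
apply: ig_sum_seq => x; apply: ig_sum_seq => y.
exact: (ig_scale _ (H _ _ _ Ht)).
Qed.
Fixpoint allw (n : nat) : seq word :=
  if n is n'.+1 then map (cons true) (allw n') ++ map (cons false) (allw n')
  else [:: [::]].



Lemma mem_cons_map (b c : bool) (w : word) (A : seq word) :
  (b :: w \in map (cons c) A) = (b == c) && (w \in A).
Proof.
apply/mapP/andP => [[y Hy [-> ->]]|[/eqP -> Hw]]; first by rewrite eqxx.
by exists w.
Qed.

Lemma mem_allw n w : (w \in allw n) = (size w == n).
Proof.
elim: n w => [|n IH] w; first by case: w.
rewrite /= mem_cat; case: w => [|c w] /=.
  by apply/negbTE; rewrite negb_or; apply/andP; split; apply/negP => /mapP [].
by rewrite !mem_cons_map eqSS -IH; case: c => /=; rewrite ?orbF.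
Qed.

Lemma uniq_allw n : uniq (allw n).
Proof.
have Hi : forall b : bool, injective (cons b) by move=> b x y [->].
elim: n => //= n IH.
rewrite cat_uniq (map_inj_uniq (Hi true)) (map_inj_uniq (Hi false)) IH /= andbT.
by apply/hasPn => x /mapP [y _ ->]; rewrite mem_cons_map.
Qed.

Definition kb (K : word -> Prop) (w : word) : bool :=
  if excluded_middle_informative (K w) then true else false.

Lemma kbP K w : reflect (K w) (kb K w).
Proof. by rewrite /kb; case: excluded_middle_informative => H; constructor. Qed.

Definition phi (K : word -> Prop) (n : nat) (f : alg) : C :=
  \sum_(w <- allw n) (if kb K w then f w else 0).

Lemma phi_wrd K n x : phi K n (wrd x) = ((size x == n) && kb K x)%:R.
Proof.
rewrite /phi /wrd.
rewrite (eq_bigr (fun w => if w == x then (kb K x)%:R else 0)); last first.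
  by move=> w _; case: (eqVneq w x) => [->|H]; case: (kb K _).
by rewrite sum_seq_one ?uniq_allw // mem_allw; case: (size x == n).
Qed.

Lemma phi_sub K n f g : phi K n (alg_sub f g) = phi K n f - phi K n g.
Proof.
rewrite /phi -sumrB; apply: eq_bigr => w _; rewrite /alg_sub.
by case: (kb K w); rewrite ?subr0.
Qed.

Lemma phi_sum_seq (X : Type) K n (r : seq X) (F : X -> alg) :
  phi K n (fun w => \sum_(x <- r) F x w) = \sum_(x <- r) phi K n (F x).
Proof.
rewrite /phi exchange_big; apply: eq_bigr => w _.
by case: (kb K w) => //; rewrite big1.
Qed.

Lemma phi_sum_ord K n m (F : nat -> alg) :
  phi K n (fun w => \sum_(i < m) F i w) = \sum_(i < m) phi K n (F i).
Proof.
rewrite /phi exchange_big; apply: eq_bigr => w _.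
by case: (kb K w) => //; rewrite big1.
Qed.

Lemma phi_scale K n (c : C) f : phi K n (fun w => c * f w) = c * phi K n f.
Proof.
rewrite /phi mulr_sumr; apply: eq_bigr => w _.
by case: (kb K w); rewrite ?mulr0.
Qed.

Lemma phi_ideal (T : alg -> Prop) (K : word -> Prop) n f :
  (forall t, T t -> exists p q, t = alg_sub (wrd p) (wrd q) /\ size p = size q /\
     forall x y, size (x ++ p ++ y) = n -> (K (x ++ p ++ y) <-> K (x ++ q ++ y))) ->
  ideal_gen T f -> phi K n f = 0.
Proof.
move=> HT [m [a [t [b [Hi ->]]]]].
rewrite (phi_sum_ord K n m (fun i => alg_mul (alg_mul (a i) (t i)) (b i))) big1 // => i _.
case: (Hi i (ltn_ord i)) => Ha Ht Hb.
case: (finsupp_dec Ha) => sa Hsa; case: (finsupp_dec Hb) => sb Hsb.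
rewrite (dec_prod (t i) Hsa Hsb) phi_sum_seq big1 // => x _.
rewrite phi_sum_seq big1 // => y _; rewrite phi_scale.
case: (HT _ Ht) => p [q [-> [Hpq HK]]].
rewrite sh_bin phi_sub !phi_wrd.
have Hs : size (x ++ p ++ y) = size (x ++ q ++ y) by rewrite !size_cat Hpq.
rewrite -Hs; case: (eqVneq (size (x ++ p ++ y)) n) => Hn /=; last by rewrite subrr mulr0.
have E : kb K (x ++ p ++ y) = kb K (x ++ q ++ y).
  by apply/idP/idP => /kbP H; apply/kbP; apply/(HK _ _ Hn).
by rewrite E subrr mulr0.
Qed.
Lemma cat_split (a b c d : word) : a ++ b = c ++ d -> (size a <= size c)%N ->
  exists e, c = a ++ e /\ b = e ++ d.
Proof.
move=> H Hs; exists (drop (size a) c).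
have Ht : take (size a) c = a.
  by rewrite -(takel_cat d Hs) -H take_size_cat.
split; first by rewrite -{1}(cat_take_drop (size a) c) Ht.
have : drop (size a) (a ++ b) = drop (size a) (c ++ d) by rewrite H.
rewrite drop_size_cat // drop_cat; case: ltnP => // Hc.
have -> : size a = size c by apply/eqP; rewrite eqn_leq Hs Hc.
by rewrite subnn drop0 drop_size.
Qed.

Definition h (w : word) : int := (count_mem true w)%:Z - (count_mem false w)%:Z.

Lemma h_cat a b : h (a ++ b) = h a + h b.
Proof. rewrite /h !count_cat !PoszD; ring. Qed.

Lemma h_nil : h [::] = 0. Proof. by []. Qed.

Lemma h_cons c w : h (c :: w) = (if c then 1 else -1) + h w.
Proof. rewrite -cat1s h_cat; congr (_ + _); by case: c. Qed.

Lemma bal_h w : balanced w = (h w == 0).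
Proof. by rewrite /balanced /h subr_eq0 eqz_nat. Qed.

Lemma elev_h W k : elev W k = h (take k W).
Proof. by []. Qed.

Definition sp (Pr : int -> bool) (W : word) : Prop :=
  [/\ W != [::], h W = 0 &
      forall e f, W = e ++ f -> e != [::] -> f != [::] -> Pr (h e)].

Lemma sp_prefix Pr W e f : ~~ Pr 0 -> sp Pr W -> W = e ++ f -> e != [::] -> f != [::] ->
  h e = 0 -> False.
Proof. by move=> HP [_ _ H] HW He Hf Hh; move: (H e f HW He Hf); rewrite Hh (negbTE HP). Qed.

Lemma prime_of_sp Pr W : ~~ Pr 0 -> sp Pr W -> prime_word W.
Proof.
move=> HP HW; case: (HW) => Hn Hh _; split => //; first by rewrite bal_h Hh.
case=> F [G [HF HG BF BG E]].
by apply: (sp_prefix HP HW E HF HG); apply/eqP; rewrite -bal_h.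
Qed.

Lemma sizeW0 (w : word) : (w != [::]) = (0 < size w)%N.
Proof. by case: w. Qed.

Lemma sp_of_prime_elev (Pr : int -> bool) W : prime_word W ->
  (forall k, (1 <= k <= (size W).-1)%N -> Pr (elev W k)) -> sp Pr W.
Proof.
case=> Hn Hb _ H; split => //; first by apply/eqP; rewrite -bal_h.
move=> e f E He Hf.
move: (H (size e)); rewrite elev_h E take_size_cat //; apply.
by rewrite size_cat; move: He Hf; rewrite !sizeW0; lia.
Qed.

Lemma elev_of_sp (Pr : int -> bool) W : sp Pr W ->
  (forall k, (1 <= k <= (size W).-1)%N -> Pr (elev W k)).
Proof.
case=> Hn Hh H k Hk; rewrite elev_h.
apply: (H _ (drop k W)); first by rewrite cat_take_drop.
  by rewrite sizeW0 size_take; case: ifP; lia.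
by rewrite sizeW0 size_drop; lia.
Qed.

Definition pos (z : int) : bool := 0 < z.
Definition neg (z : int) : bool := z < 0.

Lemma upper_sp P : upper_prime P <-> sp pos P.
Proof.
split.
  by case=> Hp H; apply: sp_of_prime_elev.
move=> H; split; first by apply: (prime_of_sp _ H).
exact: (elev_of_sp H).
Qed.

Lemma lower_sp P : lower_prime P <-> sp neg P.
Proof.
split.
  by case=> Hp H; apply: sp_of_prime_elev.
move=> H; split; first by apply: (prime_of_sp _ H).
exact: (elev_of_sp H).
Qed.
Lemma catW0 (a b : word) : (a ++ b != [::]) = (a != [::]) || (b != [::]).
Proof. by case: a. Qed.

Lemma sp_pos_neg W : sp pos W -> sp neg W -> False.
Proof.
case=> Hn Hh Hp [_ _ Hq]; case: W Hn Hh Hp Hq => [|c [|d w]] // _ Hh Hp Hq.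
  by move: Hh; rewrite h_cons h_nil; case: (c).
have := Hp [:: c] (d :: w) erefl isT isT; have := Hq [:: c] (d :: w) erefl isT isT.
by rewrite /pos /neg => A B; lia.
Qed.

Lemma sp_cat_eq (PrX PrY : int -> bool) P Q X Y : ~~ PrX 0 -> ~~ PrY 0 ->
  sp PrX X -> sp PrY Y -> P != [::] -> Q != [::] -> h P = 0 ->
  P ++ Q = X ++ Y -> P = X /\ Q = Y.
Proof.
move=> HX0 HY0 HX HY HP HQ hP E.
case: (leqP (size P) (size X)) => Hs.
  case: (cat_split E Hs) => e [EX EQ].
  case: (eqVneq e [::]) => He; first by subst e; rewrite cats0 in EX.
  by exfalso; apply: (sp_prefix HX0 HX EX HP He hP).
case: (cat_split (esym E) (ltnW Hs)) => e [EP EY].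
have He : e != [::] by rewrite sizeW0; move: Hs; rewrite EP size_cat; move: (size X) (size e) => ? ?; lia.
case: HX => _ hX _.
by exfalso; apply: (sp_prefix HY0 HY EY He HQ); move: hP; rewrite EP h_cat hX add0r.
Qed.

Lemma sp_cross X Y u m v : sp pos X -> sp neg Y -> X ++ Y = u ++ m ++ v -> h m = 0 ->
  (size u < size X)%N -> (size X < size u + size m)%N -> u = [::] /\ v = [::].
Proof.
move=> HX HY E hm H1 H2.
case: (HX) => _ hX HXi; case: (HY) => _ hY HYi.
case: (cat_split (esym E) (ltnW H1)) => e [EX E2].
have Hse : size X = (size u + size e)%N by rewrite EX size_cat.
case: (cat_split (esym E2) _) => [|g [Em EY]].
  by move: H2; rewrite Hse; lia.
have He : e != [::] by rewrite sizeW0; lia.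
have Hg : g != [::] by rewrite sizeW0; move: H2; rewrite Hse Em size_cat; lia.
have h1 : h u + h e = 0 by rewrite -h_cat -EX.
have h2 : h e + h g = 0 by rewrite -h_cat -Em.
case: (eqVneq u [::]) => Hu; case: (eqVneq v [::]) => Hv //; exfalso.
- move: (HYi g v EY Hg Hv) h1 h2; rewrite /neg Hu h_nil; lia.
- move: (HXi u e EX Hu He) h1 h2; rewrite /pos; move: hY; rewrite EY Hv cats0; lia.
- move: (HYi g v EY Hg Hv) (HXi u e EX Hu He) h1 h2; rewrite /pos /neg; lia.
Qed.

Lemma sp_swap (Pr : int -> bool) X a P Q b : ~~ Pr 0 -> sp Pr X ->
  X = a ++ P ++ Q ++ b -> P != [::] -> Q != [::] -> h P = 0 -> h Q = 0 ->
  sp Pr (a ++ Q ++ P ++ b).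
Proof.
move=> HP0 HX EX HP HQ hP hQ; case: (HX) => HXn HXh HXi.
have Ha : a != [::].
  apply/eqP => Ea; subst a.
  by apply: (sp_prefix HP0 HX (e := P) (f := Q ++ b)) => //; rewrite catW0 HQ.
have Hb : b != [::].
  apply/eqP => Eb; subst b.
  apply: (sp_prefix HP0 HX (e := a) (f := P ++ Q)) => //; first by rewrite EX cats0.
    by rewrite catW0 HP.
  by move: HXh; rewrite EX !h_cat hP hQ h_nil !addr0.
split; first by rewrite catW0 Ha.
  by move: HXh; rewrite EX !h_cat => <-; rewrite hP hQ.
move=> e f E He Hf.
case: (leqP (size e) (size a)) => H1.
  case: (cat_split (esym E) H1) => a2 [Ea Ef].
  by apply: (HXi e (a2 ++ P ++ Q ++ b)) => //; [rewrite EX Ea -catA | rewrite !catW0 HP orbT].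
case: (cat_split E (ltnW H1)) => e1 [Ee E1].
case: (leqP (size e1) (size Q)) => H2.
  case: (cat_split (esym E1) H2) => q2 [EQ Ef].
  have := HXi (a ++ P ++ e1) (q2 ++ b).
  rewrite !h_cat hP add0r Ee h_cat; apply.
  - by rewrite EX EQ !catA.
  - by rewrite catW0 Ha.
  - by rewrite catW0 Hb orbT.
case: (cat_split E1 (ltnW H2)) => e2 [Ee1 E2].
case: (leqP (size e2) (size P)) => H3.
  case: (cat_split (esym E2) H3) => p2 [EP Ef].
  have := HXi (a ++ e2) (p2 ++ Q ++ b).
  rewrite !h_cat Ee Ee1 !h_cat hQ add0r; apply.
  - by rewrite EX EP !catA.
  - by rewrite catW0 Ha.
  - by rewrite !catW0 Hb !orbT.
case: (cat_split E2 (ltnW H3)) => e3 [Ee2 Eb].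
have := HXi (a ++ P ++ Q ++ e3) f.
rewrite !h_cat Ee Ee1 Ee2 !h_cat hQ hP !add0r; apply => //.
  by rewrite EX Eb !catA.
by rewrite catW0 Ha.
Qed.
Lemma h_step W k : (k < size W)%N ->
  h (take k.+1 W) = h (take k W) + 1 \/ h (take k.+1 W) = h (take k W) - 1.
Proof.
move=> Hk; rewrite (take_nth false Hk) -cats1 h_cat.
by case: (nth false W k); [left | right].
Qed.

Lemma prime_nz W k : prime_word W -> (0 < k < size W)%N -> h (take k W) != 0.
Proof.
case=> Hn Hb Hp Hk; apply/negP => /eqP H0; apply: Hp.
exists (take k W), (drop k W); split.
- by rewrite sizeW0 size_take; case: ifP; lia.
- by rewrite sizeW0 size_drop; lia.
- by rewrite bal_h H0.
- by move: Hb; rewrite !bal_h -{1}(cat_take_drop k W) h_cat H0 add0r.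
- by rewrite cat_take_drop.
Qed.

Lemma prime_sign W : prime_word W -> forall k, (0 < k < size W)%N ->
  (0 < h (take k W)) = (0 < h (take 1 W)).
Proof.
move=> Hp; elim=> [|k IH] Hk; first by move: Hk.
case: (posnP k) => Hk0; first by subst k.
have Hk' : (0 < k < size W)%N by lia.
rewrite -(IH Hk'); have N1 := prime_nz Hp Hk; have N2 := prime_nz Hp Hk'.
have Hks : (k < size W)%N by lia.
case: (h_step Hks) => E; move: N1 N2; rewrite E; move: (h (take k W)) => z; lia.
Qed.

Lemma prime_sp W : prime_word W -> sp pos W \/ sp neg W.
Proof.
move=> Hp; case: (boolP (0 < h (take 1 W))) => H1; [left | right];
  apply: (sp_of_prime_elev Hp) => k Hk; rewrite elev_h.
  have Hk' : (0 < k < size W)%N by lia.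
  by rewrite /pos (prime_sign Hp Hk').
have Hk' : (0 < k < size W)%N by lia.
have := prime_nz Hp Hk'; move: H1; rewrite -(prime_sign Hp Hk') /neg.
move: (h (take k W)) => z; lia.
Qed.

Lemma sp_shape (Pr : int -> bool) W : ~~ Pr 0 -> sp Pr W ->
  exists c d W', [/\ W = c :: W' ++ [:: d], Pr (h [:: c]), Pr (- h [:: d]) & h W' = - h [:: c] - h [:: d]].
Proof.
move=> HP0 [Hn Hh Hi]; case: W Hn Hh Hi => [|c s] // _ Hh Hi.
case: (lastP s) Hh Hi => [|W' d] Hh Hi.
  by move: Hh; rewrite h_cons h_nil; case: (c).
have E : h [:: c] + h W' + h [:: d] = 0.
  by move: Hh; rewrite -cats1 -cat1s !h_cat addrA.
exists c, d, W'; split.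
- by rewrite cats1.
- by apply: (Hi [:: c] (rcons W' d)) => //; case: (W').
- have := Hi (c :: W') [:: d]; rewrite -cats1 => H; have := H erefl isT isT.
  rewrite -cat1s h_cat (_ : h [:: c] + h W' = - h [:: d]) //.
  by move: E; move: (h [:: c]) (h W') (h [:: d]) => x y z; lia.
- by move: E; move: (h [:: c]) (h W') (h [:: d]) => x y z; lia.
Qed.

Lemma upper_shape W : sp pos W -> exists W', W = true :: W' ++ [:: false] /\ h W' = 0.
Proof.
move=> H; case: (sp_shape (isT : ~~ pos 0) H) => c [d [W' [E Hc Hd HW]]].
exists W'; move: Hc Hd HW; rewrite E; case: (c); case: (d) => //=.
Qed.

Lemma lower_shape W : sp neg W -> exists W', W = false :: W' ++ [:: true] /\ h W' = 0.
Proof.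
move=> H; case: (sp_shape (isT : ~~ neg 0) H) => c [d [W' [E Hc Hd HW]]].
exists W'; move: Hc Hd HW; rewrite E; case: (c); case: (d) => //=.
Qed.
Definition igeq (T : alg -> Prop) (X Y : word) := ideal_gen T (alg_sub (wrd X) (wrd Y)).

Lemma igeq_refl T X : igeq T X X.
Proof. by apply: ig_ext (ig_zero T) => w; rewrite /alg_sub subrr. Qed.

Lemma igeq_sym T X Y : igeq T X Y -> igeq T Y X.
Proof.
move=> H; apply: ig_ext (ig_scale (-1) H) => w.
by rewrite /alg_sub mulN1r opprB.
Qed.

Lemma igeq_trans T X Y Z : igeq T X Y -> igeq T Y Z -> igeq T X Z.
Proof.
move=> H1 H2; apply: ig_ext (ig_add H1 H2) => w.
by rewrite /alg_sub addrA subrK.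
Qed.

Lemma igeq_gen (T : alg -> Prop) u P Q v : T (comm (wrd P) (wrd Q)) ->
  igeq T (u ++ P ++ Q ++ v) (u ++ Q ++ P ++ v).
Proof.
move=> H; have := ig_gen u v H; rewrite comm_wrd sh_bin.
by rewrite /igeq !catA.
Qed.

Lemma S_comm F G : F != [::] -> G != [::] -> balanced F -> balanced G ->
  S_set (comm (wrd F) (wrd G)).
Proof. by move=> *; exists F, G; split. Qed.

Lemma wequivE X Y : wequiv X Y = igeq S_set X Y.
Proof. by []. Qed.

Inductive eqv (U D : word -> word) : word -> word -> Prop :=
  | eqv_refl p : eqv U D p p
  | eqv_mv u v P Q : upper_prime P -> lower_prime Q ->
      eqv U D (u ++ U P ++ D Q ++ v) (u ++ D Q ++ U P ++ v)
  | eqv_sym p q : eqv U D p q -> eqv U D q p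
  | eqv_trans p q r : eqv U D p q -> eqv U D q r -> eqv U D p r.

Lemma eqv_cong U D p q u v : eqv U D p q -> eqv U D (u ++ p ++ v) (u ++ q ++ v).
Proof.
elim=> [p0|u0 v0 P Q HP HQ|p0 q0 _ IH|p0 q0 r0 _ IH1 _ IH2].
- exact: eqv_refl.
- have := eqv_mv U D (u ++ u0) (v0 ++ v) HP HQ.
  by rewrite -!catA.
- exact: eqv_sym.
- exact: eqv_trans IH1 IH2.
Qed.

Lemma eqv_ig U D p q : eqv U D p q -> igeq (S3 U D) p q.
Proof.
elim=> [p0|u0 v0 P Q HP HQ|p0 q0 _ IH|p0 q0 r0 _ IH1 _ IH2].
- exact: igeq_refl.
- by apply: igeq_gen; exists P, Q; split.
- exact: igeq_sym.
- exact: igeq_trans IH1 IH2.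
Qed.

Lemma eqv_of_J U D x y : J (alg_sub (wrd x) (wrd y)) ->
  (forall F G, F != [::] -> G != [::] -> balanced F -> balanced G ->
     (size F + size G <= size x)%N -> eqv U D (F ++ G) (G ++ F)) ->
  eqv U D x y.
Proof.
move=> HJ IH.
have HC : forall t, S_set t -> exists p q, t = alg_sub (wrd p) (wrd q) /\ size p = size q /\
     forall u v, size (u ++ p ++ v) = size x ->
       (eqv U D x (u ++ p ++ v) <-> eqv U D x (u ++ q ++ v)).
  move=> t [F [G [HF HG BF BG ->]]]; exists (F ++ G), (G ++ F); split.
    exact: comm_wrd.
  split; first by rewrite !size_cat addnC.
  move=> u v Hs.
  have E : eqv U D (u ++ (F ++ G) ++ v) (u ++ (G ++ F) ++ v).
    apply: eqv_cong; apply: IH => //; move: Hs; rewrite !size_cat => <-.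
    exact: leq_trans (leq_addr (size v) _) (leq_addl _ _).
  split => H; first exact: eqv_trans H E.
  exact: eqv_trans H (eqv_sym E).
have := phi_ideal HC HJ.
rewrite phi_sub !phi_wrd eqxx /=.
have -> : kb (eqv U D x) x by apply/kbP; apply: eqv_refl.
have H10 : (1 : C) - 0 <> 0 by rewrite subr0; apply/eqP; rewrite oner_eq0.
case: (size y == size x) => /=; last by move=> /H10.
by case: (kbP _ y) => // _ /H10.
Qed.
Lemma same_comm U D c F' G' : h F' = 0 -> h G' = 0 ->
  (forall A B, A != [::] -> B != [::] -> balanced A -> balanced B ->
     (size A + size B < size F' + size G' + 4)%N -> eqv U D (A ++ B) (B ++ A)) ->
  eqv U D ((c :: F' ++ [:: ~~ c]) ++ (c :: G' ++ [:: ~~ c]))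
          ((c :: G' ++ [:: ~~ c]) ++ (c :: F' ++ [:: ~~ c])).
Proof.
move=> hF hG IH; set M := [:: ~~ c; c].
have BM : balanced M by rewrite bal_h /M; case: (c).
have K1 : forall A, h A = 0 -> (size A + 2 < size F' + size G' + 4)%N ->
    eqv U D (A ++ M) (M ++ A).
  move=> A hA Hs; case: (eqVneq A [::]) => [->|HA]; first by rewrite cats0; apply: eqv_refl.
  by apply: IH => //; rewrite bal_h hA.
have K3 : eqv U D (F' ++ G') (G' ++ F').
  case: (eqVneq F' [::]) => [->|HF]; first by rewrite cats0; apply: eqv_refl.
  case: (eqVneq G' [::]) => [->|HG]; first by rewrite cats0; apply: eqv_refl.
  apply: IH => //; try by rewrite bal_h ?hF ?hG.
  by move: (size F') (size G') => x y; lia.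
have L : forall A B, h A = 0 -> h B = 0 -> (size A + size B = size F' + size G')%N ->
    eqv U D ((c :: A ++ [:: ~~ c]) ++ (c :: B ++ [:: ~~ c]))
            ([:: c] ++ M ++ (A ++ B) ++ [:: ~~ c]).
  move=> A B hA hB Hs.
  have E1 : (c :: A ++ [:: ~~ c]) ++ (c :: B ++ [:: ~~ c]) =
            [:: c] ++ (A ++ M) ++ (B ++ [:: ~~ c]) by rewrite /M /= -!catA.
  have E2 : [:: c] ++ (M ++ A) ++ (B ++ [:: ~~ c]) =
            [:: c] ++ M ++ (A ++ B) ++ [:: ~~ c] by rewrite -!catA.
  rewrite E1 -E2; apply: eqv_cong; apply: K1 => //.
  by move: Hs; move: (size A) (size B) (size F') (size G') => x y z t; lia.
apply: eqv_trans (L _ _ hF hG erefl) _.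
apply: eqv_trans _ (eqv_sym (L _ _ hG hF (addnC _ _))).
rewrite catA [in X in eqv _ _ _ X]catA; apply: eqv_cong; exact: K3.
Qed.
Lemma ud_comm U D : rep_choice upper_prime U -> rep_choice lower_prime D ->
  forall F G, upper_prime F -> lower_prime G ->
  (forall A B, A != [::] -> B != [::] -> balanced A -> balanced B ->
     (size A + size B <= size F)%N -> eqv U D (A ++ B) (B ++ A)) ->
  (forall A B, A != [::] -> B != [::] -> balanced A -> balanced B ->
     (size A + size B <= size G)%N -> eqv U D (A ++ B) (B ++ A)) ->
  eqv U D (F ++ G) (G ++ F).
Proof.
move=> [HU1 _] [HD1 _] F G HF HG IF IG.
have EF : eqv U D F (U F).
  by apply: eqv_of_J => //; apply: igeq_sym; case: (HU1 F HF).
have EG : eqv U D G (D G).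
  by apply: eqv_of_J => //; apply: igeq_sym; case: (HD1 G HG).
have C1 : forall A B C, eqv U D A B -> eqv U D (A ++ C) (B ++ C).
  by move=> A B C' H; exact: (eqv_cong [::] C' H).
have C2 : forall A B C, eqv U D A B -> eqv U D (C ++ A) (C ++ B).
  by move=> A B C' H; have := eqv_cong C' [::] H; rewrite !cats0.
apply: eqv_trans (C1 _ _ _ EF) _.
apply: eqv_trans (C2 _ _ _ EG) _.
apply: eqv_trans _ (C1 _ _ _ (eqv_sym EG)).
apply: eqv_trans _ (C2 _ _ _ (eqv_sym EF)).
by have := eqv_mv U D [::] [::] HF HG; rewrite /= !cats0.
Qed.

Lemma split_or_prime F : F != [::] -> balanced F ->
  prime_word F \/ exists F1 F2, [/\ F1 != [::], F2 != [::], balanced F1, balanced F2 & F = F1 ++ F2].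
Proof.
move=> HF BF; case: (Classical_Prop.classic (exists F1 F2,
  [/\ F1 != [::], F2 != [::], balanced F1, balanced F2 & F = F1 ++ F2])) => H.
  by right.
by left; split.
Qed.

Lemma main_comm U D : rep_choice upper_prime U -> rep_choice lower_prime D ->
  forall n F G, (size F + size G < n)%N -> F != [::] -> G != [::] ->
  balanced F -> balanced G -> eqv U D (F ++ G) (G ++ F).
Proof.
move=> HU HD; elim=> [|n IH] F G Hs HF HG BF BG; first by [].
have Hs' : (size F + size G <= n)%N by [].
have IHs : forall A B, A != [::] -> B != [::] -> balanced A -> balanced B ->
    (size A + size B < size F + size G)%N -> eqv U D (A ++ B) (B ++ A).
  by move=> A B HA HB BA BB Hl; apply: IH => //; exact: leq_trans Hl Hs'.
have C1 : forall A B C, eqv U D A B -> eqv U D (A ++ C) (B ++ C).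
  by move=> A B C' H; exact: (eqv_cong [::] C' H).
have C2 : forall A B C, eqv U D A B -> eqv U D (C ++ A) (C ++ B).
  by move=> A B C' H; have := eqv_cong C' [::] H; rewrite !cats0.
case: (split_or_prime HF BF) => [PF|[F1 [F2 [H1 H2 B1 B2 EF]]]]; last first.
  subst F.
  have E1 : eqv U D (F1 ++ (F2 ++ G)) (F1 ++ (G ++ F2)).
    apply: C2; apply: IHs => //; rewrite size_cat.
    by move: H1; rewrite sizeW0; move: (size F1) (size F2) (size G) => x y z; lia.
  have E2 : eqv U D ((F1 ++ G) ++ F2) ((G ++ F1) ++ F2).
    apply: C1; apply: IHs => //; rewrite size_cat.
    by move: H2; rewrite sizeW0; move: (size F1) (size F2) (size G) => x y z; lia.
  rewrite -catA; apply: eqv_trans E1 _; rewrite !catA.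
  exact: E2.
case: (split_or_prime HG BG) => [PG|[G1 [G2 [H1 H2 B1 B2 EG]]]]; last first.
  subst G.
  have E1 : eqv U D ((F ++ G1) ++ G2) ((G1 ++ F) ++ G2).
    apply: C1; apply: IHs => //; rewrite size_cat.
    by move: H2; rewrite sizeW0; move: (size F) (size G1) (size G2) => x y z; lia.
  have E2 : eqv U D (G1 ++ (F ++ G2)) (G1 ++ (G2 ++ F)).
    apply: C2; apply: IHs => //; rewrite size_cat.
    by move: H1; rewrite sizeW0; move: (size F) (size G1) (size G2) => x y z; lia.
  rewrite catA; apply: eqv_trans E1 _; rewrite -!catA.
  exact: E2.
have IF : forall A B, A != [::] -> B != [::] -> balanced A -> balanced B ->
     (size A + size B <= size F)%N -> eqv U D (A ++ B) (B ++ A).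
  move=> A B HA HB BA BB Hl; apply: IHs => //; move: HG Hl; rewrite sizeW0.
  by move: (size A) (size B) (size F) (size G) => a b x y; lia.
have IG : forall A B, A != [::] -> B != [::] -> balanced A -> balanced B ->
     (size A + size B <= size G)%N -> eqv U D (A ++ B) (B ++ A).
  move=> A B HA HB BA BB Hl; apply: IHs => //; move: HF Hl; rewrite sizeW0.
  by move: (size A) (size B) (size F) (size G) => a b x y; lia.
case: (prime_sp PF) => SF; case: (prime_sp PG) => SG.
- case: (upper_shape SF) => F' [EF hF]; case: (upper_shape SG) => G' [EG hG].
  rewrite EF EG; apply: (same_comm true hF hG) => A B HA HB BA BB Hl.
  apply: IHs => //; move: Hl; rewrite EF EG /= !size_cat /=.
  by move: (size A) (size B) (size F') (size G') => a b x y; lia.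
- by apply: (ud_comm HU HD) => //; [apply/upper_sp | apply/lower_sp].
- by apply: eqv_sym; apply: (ud_comm HU HD) => //; [apply/upper_sp | apply/lower_sp].
- case: (lower_shape SF) => F' [EF hF]; case: (lower_shape SG) => G' [EG hG].
  rewrite EF EG; apply: (same_comm false hF hG) => A B HA HB BA BB Hl.
  apply: IHs => //; move: Hl; rewrite EF EG /= !size_cat /=.
  by move: (size A) (size B) (size F') (size G') => a b x y; lia.
Qed.
Lemma S3_S U D : rep_choice upper_prime U -> rep_choice lower_prime D ->
  forall x, S3 U D x -> S_set x.
Proof.
move=> [HU1 _] [HD1 _] x [P [Q [HP HQ ->]]].
case: (HU1 P HP) => [[[HUn HUb _] _] _]; case: (HD1 Q HQ) => [[[HDn HDb _] _] _].
exact: S_comm.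
Qed.

Lemma part2 U D : rep_choice upper_prime U -> rep_choice lower_prime D ->
  forall f, ideal_gen (S3 U D) f <-> J f.
Proof.
move=> HU HD f; split; first exact: ig_mono (S3_S HU HD).
apply: ig_decomp => t x y [F [G [HF HG BF BG ->]]].
rewrite comm_wrd sh_bin; apply: eqv_ig; apply: eqv_cong.
exact: (main_comm HU HD (n := (size F + size G).+1)).
Qed.

Lemma sp_up U P : rep_choice upper_prime U -> upper_prime P -> sp pos (U P).
Proof. by move=> [H _] HP; apply/upper_sp; case: (H P HP). Qed.

Lemma sp_down D Q : rep_choice lower_prime D -> lower_prime Q -> sp neg (D Q).
Proof. by move=> [H _] HQ; apply/lower_sp; case: (H Q HQ). Qed.

Lemma K_closed U D (HU : rep_choice upper_prime U) (HD : rep_choice lower_prime D)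
  P0 Q0 P Q A B x y X Y :
  upper_prime P0 -> lower_prime Q0 -> upper_prime P -> lower_prime Q ->
  ~ (U P = U P0 /\ D Q = D Q0) ->
  (A = U P /\ B = D Q) \/ (A = D Q /\ B = U P) ->
  x ++ A ++ B ++ y = X ++ Y -> sp pos X -> sp neg Y ->
  wequiv X (U P0) -> wequiv Y (D Q0) ->
  exists X' Y', [/\ x ++ B ++ A ++ y = X' ++ Y', sp pos X', sp neg Y',
                    wequiv X' (U P0) & wequiv Y' (D Q0)].
Proof.
move=> HP0 HQ0 HP HQ Hne HAB E SX SY WX WY.
have SUP := sp_up HU HP; have SDQ := sp_down HD HQ.
have [HAn hA] : A != [::] /\ h A = 0.
  by case: HAB => [[-> _]|[-> _]]; [case: SUP | case: SDQ] => ? ? _; split.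
have [HBn hB] : B != [::] /\ h B = 0.
  by case: HAB => [[_ ->]|[_ ->]]; [case: SDQ | case: SUP] => ? ? _; split.
have SBA : S_set (comm (wrd B) (wrd A)) by apply: S_comm => //; rewrite bal_h ?hA ?hB.
case: (leqP (size x + size A + size B) (size X)) => H1.
  have E' : (x ++ A ++ B) ++ y = X ++ Y by rewrite -!catA.
  have Hs : (size (x ++ A ++ B) <= size X)%N by rewrite !size_cat addnA.
  case: (cat_split E' Hs) => e [EX Ey].
  exists (x ++ B ++ A ++ e), Y; split.
  - by rewrite Ey -!catA.
  - by apply: (sp_swap _ SX) => //; rewrite EX -!catA.
  - exact: SY.
  - rewrite wequivE; apply: igeq_trans WX; rewrite EX -!catA.
    exact: igeq_gen.
  - exact: WY.
case: (leqP (size X) (size x)) => H2.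
  case: (cat_split (esym E) H2) => e [Ex EY].
  exists X, (e ++ B ++ A ++ y); split.
  - by rewrite Ex -!catA.
  - exact: SX.
  - by apply: (sp_swap _ SY) => //; rewrite EY.
  - exact: WX.
  - rewrite wequivE; apply: igeq_trans WY; rewrite EY.
    exact: igeq_gen.
have E' : X ++ Y = x ++ (A ++ B) ++ y by rewrite -E -catA.
have hm : h (A ++ B) = 0 by rewrite h_cat hA hB addr0.
have Hs : (size X < size x + size (A ++ B))%N by rewrite size_cat addnA.
case: (sp_cross SX SY E' hm H2 Hs) => Ex Ey; subst x y; move: E; rewrite /= cats0 => E.
case: (sp_cat_eq (PrX := pos) (PrY := neg) isT isT SX SY HAn HBn hA E) => EA EB.
case: HAB => [[EA' EB']|[EA' EB']]; last first.
  by exfalso; apply: (sp_pos_neg (W := X)) => //; rewrite -EA EA'.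
exfalso; apply: Hne; case: HU => HU1 HU2; case: HD => HD1 HD2; split.
  apply: HU2 => //; rewrite wequivE.
  apply: igeq_trans (igeq_sym (proj2 (HU1 P HP))) _.
  rewrite -EA' EA; apply: igeq_trans WX _.
  exact: (proj2 (HU1 P0 HP0)).
apply: HD2 => //; rewrite wequivE.
apply: igeq_trans (igeq_sym (proj2 (HD1 Q HQ))) _.
rewrite -EB' EB; apply: igeq_trans WY _.
exact: (proj2 (HD1 Q0 HQ0)).
Qed.
Theorem theorem5p8 (U D : word -> word) :
  rep_choice upper_prime U -> rep_choice lower_prime D ->
  [/\ (forall x, S3 U D x -> S_set x),
      (forall f, ideal_gen (S3 U D) f <-> J f) &
      (forall T : alg -> Prop,
          (forall x, T x -> S3 U D x) -> (exists x, S3 U D x /\ ~ T x) ->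
          ~ (forall f, ideal_gen T f <-> J f))].
Proof.
move=> HU HD; split; [exact: S3_S | exact: part2 |].
move=> T HT [x0 [[P0 [Q0 [HP0 HQ0 Ex0]]] HnT]] Heq.
have SU0 := sp_up HU HP0; have SD0 := sp_down HD HQ0.
case: (SU0) => HU0n hU0 _; case: (SD0) => HD0n hD0 _.
have BU0 : balanced (U P0) by rewrite bal_h hU0.
have BD0 : balanced (D Q0) by rewrite bal_h hD0.
have Jx0 : J x0.
  have := ig_gen [::] [::] (S_comm HU0n HD0n BU0 BD0).
  by rewrite Ex0 comm_wrd sh_bin /= !cats0.
have Tx0 : ideal_gen T x0 by apply/Heq.
pose K W := exists X Y, [/\ W = X ++ Y, sp pos X, sp neg Y,
                           wequiv X (U P0) & wequiv Y (D Q0)].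
have HC : forall t, T t -> exists p q, t = alg_sub (wrd p) (wrd q) /\ size p = size q /\
     forall x y, size (x ++ p ++ y) = size (U P0 ++ D Q0) ->
       (K (x ++ p ++ y) <-> K (x ++ q ++ y)).
  move=> t Tt; case: (HT t Tt) => P [Q [HP HQ Et]].
  exists (U P ++ D Q), (D Q ++ U P); split; first by rewrite Et comm_wrd.
  split; first by rewrite !size_cat addnC.
  have Hne : ~ (U P = U P0 /\ D Q = D Q0).
    by case=> E1 E2; apply: HnT; rewrite Ex0 -E1 -E2 -Et.
  move=> x y _; rewrite -!catA; split.
    move=> [X [Y [E SX SY WX WY]]].
    have := K_closed HU HD HP0 HQ0 HP HQ Hne (or_introl (conj erefl erefl)) E SX SY WX WY.
    by case=> X' [Y' [E' ? ? ? ?]]; exists X', Y'; split.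
  move=> [X [Y [E SX SY WX WY]]].
  have := K_closed HU HD HP0 HQ0 HP HQ Hne (or_intror (conj erefl erefl)) E SX SY WX WY.
  by case=> X' [Y' [E' ? ? ? ?]]; exists X', Y'; split.
have := phi_ideal HC Tx0.
rewrite Ex0 comm_wrd phi_sub !phi_wrd eqxx /=.
have -> : kb K (U P0 ++ D Q0).
  apply/kbP; exists (U P0), (D Q0); split => //; exact: igeq_refl.
have -> : kb K (D Q0 ++ U P0) = false.
  apply/negbTE/negP => /kbP [X [Y [E SX SY _ _]]].
  case: (sp_cat_eq (PrX := pos) (PrY := neg) isT isT SX SY HD0n HU0n hD0 E) => EX _.
  by apply: (sp_pos_neg (W := X)) => //; rewrite -EX.
rewrite andbF subr0 /= => H1.
have E : (1 : C) = 0 by rewrite -H1 mulr1n.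
by have := oner_neq0 C; rewrite E eqxx.
Qed.
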